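(* Let $N\ge1$ and let $\tilde\Phi:\mathbb{R}^N\to\mathbb{R}$ be a twice differentiable convex function with $\nabla\tilde\Phi(G)\in\Delta_N$ and $\nabla_i\tilde\Phi(G)>0$ for all $G$ and $i$. Suppose that for constants $C,\gamma>0$, $\tilde\Phi$ is $(\gamma,C)$-differentially-consistent, i.e. for all $G\in(-\infty,0]^N$ and all $i$, $\nabla^2_{ii}\tilde\Phi(G)\le C(\nabla_i\tilde\Phi(G))^\gamma$. Consider one round $t$ of GBPA$(\tilde\Phi)$ with loss vector $g_t\in[-1,0]^N$ and current estimate $\hat G_{t-1}\in(-\infty,0]^N$. Then \[\mathbb{E}_{i_t}\big[D_{\tilde\Phi}(\hat G_t,\hat G_{t-1})\,\big|\,\hat G_{t-1}\big]\le\frac{C}{2}\sum_{i=1}^N\big(\nabla_i\tilde\Phi(\hat G_{t-1})\big)^{\gamma-1}.\]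
   Context: $\Delta_N$ is the probability simplex in $\mathbb{R}^N$, $e_i$ the $i$-th standard basis vector. One round of GBPA$(\tilde\Phi)$ at time $t$: given $\hat G_{t-1}$, sample $i_t$ with probability $p_{t,i}=\nabla_i\tilde\Phi(\hat G_{t-1})$, observe $g_{t,i_t}$, set $\hat G_t=\hat G_{t-1}+\frac{g_{t,i_t}}{p_{t,i_t}}e_{i_t}$ (the algorithm starts from $\hat G_0=0$, so all $\hat G_t$ lie in $(-\infty,0]^N$). $D_{\tilde\Phi}(x,y)=\tilde\Phi(x)-\tilde\Phi(y)-\langle\nabla\tilde\Phi(y),x-y\rangle$ is the Bregman divergence; $\nabla_i$ and $\nabla^2_{ii}$ denote first and second partial derivatives in coordinate $i$. *)

(* Defs.v *)
From HB Require Import structures.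
From mathcomp Require Import all_boot all_order all_algebra.
From mathcomp Require Import all_classical all_reals all_analysis.
Set Implicit Arguments. Unset Strict Implicit. Unset Printing Implicit Defensive.
Import Order.TTheory GRing.Theory Num.Theory.
Import numFieldNormedType.Exports.
Local Open Scope ring_scope.

Section Defs.
Variables (R : realType) (N : nat).

Definition e_vec (i : 'I_N) : 'rV[R]_N := delta_mx 0 i.

Definition partial (i : 'I_N) (f : 'rV[R]_N -> R) (G : 'rV[R]_N) : R :=
  'D_(e_vec i) f G.

Definition grad (f : 'rV[R]_N -> R) (G : 'rV[R]_N) : 'rV[R]_N :=
  \row_i partial i f G.

Definition partial2 (i : 'I_N) (f : 'rV[R]_N -> R) (G : 'rV[R]_N) : R :=
  'D_(e_vec i) (partial i f) G.

Definition in_simplex (p : 'rV[R]_N) : Prop :=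
  (forall i, 0 <= p 0 i) /\ \sum_i p 0 i = 1.

Definition nonpos_vec (G : 'rV[R]_N) : Prop := forall i, G 0 i <= 0.

Definition convex_fun_rV (f : 'rV[R]_N -> R) : Prop :=
  forall (x y : 'rV[R]_N) (t : R), 0 <= t <= 1 ->
    f (t *: x + (1 - t) *: y) <= t * f x + (1 - t) * f y.

Definition bregman (f : 'rV[R]_N -> R) (x y : 'rV[R]_N) : R :=
  f x - f y - \sum_i grad f y 0 i * (x - y) 0 i.

Definition diff_consistent (gamma C : R) (f : 'rV[R]_N -> R) : Prop :=
  forall G, nonpos_vec G -> forall i, partial2 i f G <= C * (partial i f G) `^ gamma.

(* one GBPA update when coordinate i is sampled: G + (g_i / p_i) e_i *)
Definition gbpa_next (f : 'rV[R]_N -> R) (Gprev g : 'rV[R]_N) (i : 'I_N) : 'rV[R]_N :=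
  Gprev + (g 0 i / partial i f Gprev) *: e_vec i.

End Defs.

(* Main.v *)
Set Warnings "-all".
Require Import Defs.
From HB Require Import structures.
From mathcomp Require Import all_boot all_order all_algebra.
From mathcomp Require Import all_classical all_reals all_analysis.
From mathcomp Require Import lra ring.
Import Order.TTheory GRing.Theory Num.Theory.
Import numFieldNormedType.Exports.
Local Open Scope ring_scope.
Local Open Scope classical_set_scope.
Lemma key1d (R : realType) (phi q q2 : R -> R) (h K : R) :
  h <= 0 -> (forall s, is_derive (s:R) (1:R) phi (q s)) ->
  (forall s, is_derive (s:R) (1:R) q (q2 s)) ->
  (forall s, h <= s <= 0 -> q2 s <= K) ->
  phi h - phi 0 - q 0 * h <= K * h ^+ 2 / 2.
Proof.
move=> h0 dphi dq hq2.
pose chi : R -> R := q - cst (q 0) - K \*: (@id R).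
have dchi (s : R) : is_derive s (1:R) chi (q2 s - 0 - K *: (1:R)) by apply: is_deriveB.
have cont (f df : R -> R) : (forall s : R, is_derive s (1:R) f (df s)) -> continuous f.
  move=> H s; apply: differentiable_continuous; apply/derivable1_diffP.
  by have := H s => -[].
have chi0 s : h <= s <= 0 -> 0 <= chi s.
  move=> /andP[hs s0].
  have [d dI E] := MVT_segment s0 (fun x _ => dchi x) (continuous_subspaceT (cont _ _ dchi)).
  have : chi 0 - chi s <= 0.
    rewrite E; apply: mulr_le0_ge0; last by rewrite sub0r oppr_ge0.
    move: dI; rewrite in_itv /= => /andP[sd d0].
    have := hq2 d; rewrite d0 (le_trans hs sd) /= => /(_ isT).
    rewrite -[K%:A]/(K * 1); lra.
  rewrite /chi !fctE /= -[K *: s]/(K * s) -[K *: 0]/(K * 0); lra.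
pose psi : R -> R := phi - q 0 \*: (@id R) - (K / 2) \*: ((@id R) ^+ 2).
have dpsi (s:R) : is_derive s (1:R) psi (chi s).
  apply: is_derive_eq.
  rewrite /chi !fctE /= expr1 -[(q 0)%:A]/(q 0 * 1) -[_ *: (2 * s)%:A]/((K/2) * ((2 * s) * 1)) -[K *: s]/(K * s).
  by field.
have [c cI E] := MVT_segment h0 (fun x _ => dpsi x) (continuous_subspaceT (cont _ _ dpsi)).
have : 0 <= psi 0 - psi h.
  rewrite E; apply: mulr_ge0; last by rewrite sub0r oppr_ge0.
  by apply: chi0; rewrite in_itv /= in cI.
rewrite /psi !fctE /= -[q 0 *: h]/(q 0 * h) -[q 0 *: 0]/(q 0 * 0) -![_ *: _ ^+ 2]/(_ * _ ^+ 2).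
rewrite expr0n /= mulr0 !subr0; lra.
Qed.
Lemma line_quot (R : realType) (V : normedModType R) (f : V -> R) (G e : V) (s : R) :
  (fun h : R => h^-1 *: (((fun t : R => f (t *: e + G)) \o shift s) (h *: (1:R)) - f (s *: e + G)))
  = (fun h : R => h^-1 *: ((f \o shift (s *: e + G)) (h *: e) - f (s *: e + G))).
Proof.
apply/funext => h /=; congr (_ *: (f _ - _)).
by rewrite -[h *: 1]/(h * 1) mulr1 scalerDl addrA.
Qed.

Lemma line_derive (R : realType) (V : normedModType R) (f : V -> R) (G e : V) (s : R) :
  derivable f (s *: e + G) e ->
  is_derive s (1:R) (fun t : R => f (t *: e + G)) ('D_e f (s *: e + G)).
Proof.
move=> H; split; rewrite /derivable /derive line_quot //.
Qed.
Lemma tangent (R : realType) N (f : 'rV[R]_N -> R) (x y : 'rV[R]_N) :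
  convex_fun_rV f -> derivable f x (y - x) -> f x + 'D_(y - x) f x <= f y.
Proof.
move=> cvx dx.
rewrite addrC -lerBrDr /derive.
rewrite (cvg_at_rightE (fun h : R => h^-1 *: ((f \o shift x) (h *: (y - x)) - f x))) //.
apply: limr_le.
  by apply/cvg_ex; exists (lim ((fun h : R => h^-1 *: ((f \o shift x) (h *: (y - x)) - f x)) @ 0^')); exact: cvg_dnbhs_at_right dx.
near=> h.
have h0 : 0 < h by near: h; exact: nbhs_right_gt.
have h1 : h <= 1 by near: h; exact: nbhs_right_le.
have := cvx y x h; rewrite ltW //= h1 => /(_ isT).
have -> : h *: y + (1 - h) *: x = (shift x) (h *: (y - x)).
  by rewrite /= scalerBr scalerBl scale1r addrA addrAC.
move=> H; rewrite /= -[_ *: _]/(h^-1 * _).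
rewrite ler_pdivrMl //.
lra.
Unshelve. all: by end_near.
Qed.

Lemma deriveZdir (R : realType) N (f : 'rV[R]_N -> R) (x e : 'rV[R]_N) (c : R) :
  differentiable f x -> 'D_(c *: e) f x = c * 'D_e f x.
Proof. by move=> df; rewrite !deriveE // linearZ. Qed.

Theorem theorem1 (R : realType) (N : nat) (Phi : 'rV[R]_N -> R) (C gamma : R)
    (g Gprev : 'rV[R]_N) :
  (0 < N)%N ->
  (forall G, differentiable Phi G) ->
  (forall G, differentiable (grad Phi) G) ->
  convex_fun_rV Phi ->
  (forall G, in_simplex (grad Phi G)) ->
  (forall G i, 0 < partial i Phi G) ->
  0 < C -> 0 < gamma ->
  diff_consistent gamma C Phi ->
  (forall i, -1 <= g 0 i <= 0) ->
  nonpos_vec Gprev ->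
  \sum_i partial i Phi Gprev * bregman Phi (gbpa_next Phi Gprev g i) Gprev
    <= C / 2 * \sum_i (partial i Phi Gprev) `^ (gamma - 1).
Proof.
move=> N0 dPhi dgrad cvx simp ppos C0 g0 dcons gb Gnp.
rewrite mulr_sumr; apply: ler_sum => i _.
set G := Gprev; set e := @e_vec R N i; set p0 := @partial R N i Phi G.
have p0pos : 0 < p0 := ppos G i.
have dpart x : differentiable (@partial R N i Phi) x.
  have -> : @partial R N i Phi = (fun M : 'rV[R]_N => M 0 i) \o grad Phi.
    by apply/funext => M /=; rewrite /grad mxE.
  apply: differentiable_comp => //; exact: differentiable_coord.
have qle (s : R) : s <= 0 -> @partial R N i Phi (s *: e + G) <= p0.
  move=> s0.
  have t1 := @tangent R N Phi _ _ cvx (@diff_derivable _ _ _ Phi G (s *: e + G - G) (dPhi G)).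
  have t2 := @tangent R N Phi _ _ cvx (@diff_derivable _ _ _ Phi (s *: e + G) (G - (s *: e + G)) (dPhi (s *: e + G))).
  have E1 : s *: e + G - G = s *: e by rewrite addrK.
  have E2 : G - (s *: e + G) = (- s) *: e by rewrite opprD addrCA subrr addr0 scaleNr.
  rewrite E1 deriveZdir // in t1; rewrite E2 deriveZdir // in t2.
  rewrite -/(@partial R N i Phi G) -/p0 in t1.
  rewrite -/(@partial R N i Phi (s *: e + G)) in t2.
  have [->|sneg] := eqVneq s 0.
    by rewrite scale0r add0r.
  have sn : s < 0 by rewrite lt_neqAle sneg s0.
  nra.
have npv (s : R) : s <= 0 -> nonpos_vec (s *: e + G).
  move=> s0 j; rewrite !mxE.
  have := Gnp j; case: (_ == _); case: (_ == _) => /=; rewrite ?mulr1 ?mulr0 ?add0r //.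
  lra.
set gi := g 0 i; set h := gi / p0.
have h0 : h <= 0.
  by rewrite /h; apply: mulr_le0_ge0; [case/andP: (gb i) | rewrite invr_ge0 ltW].
have Hb : bregman Phi (gbpa_next Phi G g i) G =
   Phi (h *: e + G) - Phi (0 *: e + G) - partial i Phi (0 *: e + G) * h.
  rewrite scale0r add0r /bregman /gbpa_next -/e -/gi -/p0 -/h (addrC G) addrK.
  congr (_ - _); rewrite (bigD1 i) //= big1 ?addr0.
    by rewrite !mxE /= eqxx mulr1.
  by move=> j ji; rewrite /e /e_vec !mxE /= (negbTE ji) /= mulr0 mulr0.
set K := C * p0 `^ gamma.
have key := @key1d R (fun t => Phi (t *: e + G)) (fun t => partial i Phi (t *: e + G))
   (fun t => partial2 i Phi (t *: e + G)) h K h0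
   (fun s => @line_derive R _ Phi G e s (@diff_derivable _ _ _ Phi _ e (dPhi (s *: e + G))))
   (fun s => @line_derive R _ (partial i Phi) G e s (@diff_derivable _ _ _ (partial i Phi) _ e (dpart (s *: e + G)))).
have hq2 (s : R) : h <= s <= 0 -> partial2 i Phi (s *: e + G) <= K.
  case/andP=> _ s0.
  have D := dcons _ (npv s s0) i.
  rewrite /partial2 /= in D *.
  apply: (le_trans D). rewrite /K. apply: ler_wpM2l; first exact: ltW.
  apply: ge0_ler_powR; first exact: ltW.
  - by rewrite nnegrE; apply: ltW; apply: ppos.
  - by rewrite nnegrE; apply: ltW.
  - exact: qle.
have key2 := key hq2.
rewrite -Hb in key2.
set B := bregman _ _ _ in key2 *.
set P := p0 `^ (gamma - 1).
have XP : p0 `^ gamma = P * p0.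
  have E := @powRD R p0 (gamma - 1) 1.
  rewrite subrK powRr1 ?(ltW p0pos) // in E; apply: E.
  by rewrite (lt0r_neq0 p0pos) implybT.
have P0 : 0 <= P := powR_ge0 _ _.
have H1 : p0 * B <= p0 * (K * h ^+ 2 / 2) by apply: ler_wpM2l; [exact: ltW|].
have H2 : p0 * (K * h ^+ 2 / 2) = C / 2 * P * gi ^+ 2.
  rewrite /K XP /h; field; exact: lt0r_neq0.
have H3 : gi ^+ 2 <= 1.
  have := gb i; rewrite -/gi => /andP[a b]; nra.
have H4 : C / 2 * P * gi ^+ 2 <= C / 2 * P.
  rewrite -[leRHS]mulr1; apply: ler_wpM2l => //.
  by apply: mulr_ge0 => //; apply: divr_ge0; [exact: ltW|].
lra.
Qed.
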